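(* Let $G=(V,E)$ be a connected graph with positive edge costs $c:E\to\mathbb{R}_+$, let $\alpha\ge1$, and let $(U,\complement{U})$ be an $\alpha$-approximate minimum cut of $G$. Let $\mathcal{C}=\{Q\subsetneq V:\complement{U}\subsetneq Q,\ d(Q)\le d(U)\}$ and suppose $\mathcal{C}\ne\emptyset$. Let $S\subseteq U$ be a minimal (with respect to inclusion) set such that $S\cap Q\ne\emptyset$ for all $Q\in\mathcal{C}$. Then $|S|\le\lfloor 2\alpha\rfloor+1$.
   Context: A cut is a partition of $V$ into two non-empty parts; for $\emptyset\ne U\subsetneq V$ write $\complement{U}=V\setminus U$ and $d(U)$ for the total cost of edges with exactly one endpoint in $U$. Let $\lambda=\min\{d(U):\emptyset\ne U\subsetneq V\}$; $(U,\complement{U})$ is an $\alpha$-approximate minimum cut if $d(U)\le\alpha\lambda$. *)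

(* Defs.v *)
From HB Require Import structures.
From mathcomp Require Import all_boot all_order all_algebra.
Set Implicit Arguments. Unset Strict Implicit. Unset Printing Implicit Defensive.
Import Order.TTheory GRing.Theory Num.Theory.
Local Open Scope ring_scope.

Definition weighted_graph (R : realFieldType) (V : finType) (e : rel V)
    (c : V -> V -> R) : Prop :=
  [/\ symmetric e, irreflexive e,
      (forall x y, c x y = c y x) & (forall x y, e x y -> 0 < c x y)].

Definition connected_graph (V : finType) (e : rel V) : Prop :=
  forall x y : V, connect e x y.

(* d(U): total cost of edges with exactly one endpoint in U
   (each such edge {x,y} is counted once, via its endpoint x in U). *)
Definition dcut (R : realFieldType) (V : finType) (e : rel V)
    (c : V -> V -> R) (U : {set V}) : R :=
  \sum_(x in U) \sum_(y in ~: U | e x y) c x y.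

Definition is_cut (V : finType) (U : {set V}) : bool :=
  (U != set0) && (U != setT).

(* (U, ~U) is an alpha-approximate minimum cut: d(U) <= alpha * lambda,
   where lambda is the minimum of d over cuts (unfolded: d(U) <= alpha d(W)
   for every cut W). *)
Definition approx_min_cut (R : realFieldType) (V : finType) (e : rel V)
    (c : V -> V -> R) (alpha : R) (U : {set V}) : Prop :=
  is_cut U /\ forall W : {set V}, is_cut W -> dcut e c U <= alpha * dcut e c W.

Definition inC (R : realFieldType) (V : finType) (e : rel V)
    (c : V -> V -> R) (U Q : {set V}) : bool :=
  [&& Q \proper setT, (~: U) \proper Q & dcut e c Q <= dcut e c U].

Definition hitsC (R : realFieldType) (V : finType) (e : rel V)
    (c : V -> V -> R) (U S : {set V}) : bool :=
  [forall Q : {set V}, inC e c U Q ==> (S :&: Q != set0)].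

(* Main.v *)
Require Import Defs.
From HB Require Import structures.
From mathcomp Require Import all_boot all_order all_algebra.
From mathcomp Require Import zify lra.
Import Order.TTheory GRing.Theory Num.Theory.
Set Implicit Arguments. Unset Strict Implicit. Unset Printing Implicit Defensive.
Lemma sum_xor_le (n a b : nat) : a <= b ->
  \sum_(i < n) ((i < a) != (i < b) : nat) = minn b n - minn a n.
Proof.
move=> ab; elim: n => [|n IH]; first by rewrite big_ord0; lia.
rewrite big_ord_recr /= IH.
case: (ltnP n a) => ha; case: (ltnP n b) => hb /=; lia.
Qed.

Lemma sum_xor (n a b : nat) :
  \sum_(i < n) ((i < a) != (i < b) : nat) = maxn (minn b n) (minn a n) - minn (minn b n) (minn a n).
Proof.
case: (leqP a b) => ab; first by rewrite sum_xor_le //; lia.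
rewrite (eq_bigr (fun i : 'I_n => ((i < b) != (i < a) : nat))); last by move=> i _; rewrite eq_sym.
rewrite sum_xor_le; [lia|lia].
Qed.

Section Comb.
Variable V : finType.

Lemma sum_in_card (S A : {set V}) : A \subset S ->
  \sum_(s in S) ((s \in A) : nat) = #|A|.
Proof.
move=> sub.
rewrite (eq_bigr (fun s => if s \in A then 1 else 0)%N); last by move=> s _; case: (s \in A).
rewrite -big_mkcondr /= (eq_bigl (fun s => s \in A)) ?sum1_card //.
move=> s /=; case sA: (s \in A); last by rewrite andbF.
by rewrite (subsetP sub s sA).
Qed.

Lemma xor_ident (S A B : {set V}) : A \subset S -> B \subset S ->
  \sum_(s in S) (((s \in A) != (s \in B)) : nat) + 2 * #|A :&: B| = #|A| + #|B|.
Proof.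
move=> sA sB.
rewrite -(sum_in_card sA) -(sum_in_card sB) -(@sum_in_card S (A :&: B)); last first.
  by apply: subset_trans sA; apply: subsetIl.
rewrite big_distrr /= -!big_split /=.
apply: eq_bigr => s _; rewrite inE; case: (s \in A); case: (s \in B) => //.
Qed.

Lemma xor_pos (S A B : {set V}) : A \subset S -> B \subset S -> A != B ->
  (0 < \sum_(s in S) (((s \in A) != (s \in B)) : nat))%N.
Proof.
move=> sA sB; case/eqP/setP/eqfunP/forallPn => x /= hx.
have xS : x \in S.
  move: hx; case xA: (x \in A); first by rewrite (subsetP sA x xA).
  by case xB: (x \in B) => // _; rewrite (subsetP sB x xB).
by rewrite (bigD1 x) //= hx.
Qed.

Lemma count1_le (S A : {set V}) :
  (\sum_(s in S) ((A == S :\ s) : nat) <= 1)%N /\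
  ((0 < \sum_(s in S) ((A == S :\ s) : nat))%N -> #|A| = #|S| - 1)%N.
Proof.
case: (boolP [exists s in S, A == S :\ s]) => [/existsP [s0 /andP [s0S /eqP hA]]|].
  have -> : \sum_(s in S) ((A == S :\ s) : nat) = 1%N.
    rewrite (bigD1 s0) //= hA eqxx big1 //.
    move=> t /andP [tS ts0]; apply/eqP; rewrite eqb0; apply/negP => /eqP/setP/(_ s0).
    rewrite !inE eqxx s0S andbT eq_sym (negbTE ts0) /=. done.
  split=> // _; rewrite hA (cardsD1 s0 S) s0S; lia.
move/existsPn=> h; rewrite big1; first by split.
by move=> s sS; have := h s; rewrite sS /= => /negbTE ->.
Qed.
Lemma comb (S A B : {set V}) : A \subset S -> B \subset S ->
  (\sum_(s in S) (((A == S :\ s) != (B == S :\ s)) : nat)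
   + \sum_(i < #|S| - 2) (((i < #|A|) != (i < #|B|)) : nat)
   <= \sum_(s in S) (((s \in A) != (s \in B)) : nat))%N.
Proof.
move=> sA sB.
case: (eqVneq A B) => [->|nAB].
  rewrite !big1 //; by move=> *; rewrite eqxx.
have h1 : (\sum_(s in S) (((A == S :\ s) != (B == S :\ s)) : nat) <=
   \sum_(s in S) ((A == S :\ s) : nat) + \sum_(s in S) ((B == S :\ s) : nat))%N.
  rewrite -big_split /=; apply: leq_sum => s _.
  by case: (A == S :\ s); case: (B == S :\ s).
have [hA1 hA2] := count1_le S A.
have [hB1 hB2] := count1_le S B.
have hx := xor_ident sA sB.
have hp := xor_pos sA sB nAB.
rewrite sum_xor.
have cA := subset_leq_card sA.
have cB := subset_leq_card sB.
have iA : (#|A :&: B| <= #|A|)%N by apply: subset_leq_card; apply: subsetIl.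
have iB : (#|A :&: B| <= #|B|)%N by apply: subset_leq_card; apply: subsetIr.
lia.
Qed.
End Comb.

Local Open Scope ring_scope.
Section G.
Variables (R : realFieldType) (V : finType) (e : rel V) (c : V -> V -> R).
Hypothesis esym : symmetric e.
Hypothesis csym : forall x y, c x y = c y x.

Definition w x y : R := if e x y then c x y else 0.

Lemma wsym x y : w x y = w y x.
Proof. by rewrite /w esym csym. Qed.

Lemma dcut_half (X : {set V}) :
  dcut e c X = \sum_x \sum_y w x y *+ ((x \in X) && (y \notin X)).
Proof.
rewrite /dcut big_mkcond /=; apply: eq_bigr => x _.
case xX: (x \in X) => /=.
  rewrite big_mkcond /=; apply: eq_bigr => y _.
  by rewrite inE /w; case: (y \in X); case: (e x y).
by rewrite big1.
Qed.

Lemma dcut_pairs (X : {set V}) :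
  dcut e c X *+ 2 = \sum_x \sum_y w x y *+ ((x \in X) != (y \in X)).
Proof.
rewrite mulr2n.
have E : dcut e c X = \sum_x \sum_y w x y *+ ((y \in X) && (x \notin X)).
  rewrite dcut_half exchange_big /=; apply: eq_bigr => x _; apply: eq_bigr => y _.
  by rewrite wsym.
rewrite {2}E [Z in Z + _]dcut_half -big_split /=; apply: eq_bigr => x _.
rewrite -big_split /=; apply: eq_bigr => y _.
by rewrite -mulrnDr; case: (x \in X); case: (y \in X).
Qed.

Lemma dcut_family (I : finType) (P : pred I) (F : I -> {set V}) :
  \sum_(i | P i) dcut e c (F i) *+ 2 =
  \sum_x \sum_y w x y *+ (\sum_(i | P i) ((x \in F i) != (y \in F i) : nat)).
Proof.
rewrite (eq_bigr (fun i => \sum_x \sum_y w x y *+ ((x \in F i) != (y \in F i)))); last first.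
  by move=> i _; rewrite dcut_pairs.
rewrite exchange_big /=; apply: eq_bigr => x _.
rewrite exchange_big /=; apply: eq_bigr => y _.
by rewrite sumrMnr.
Qed.

Hypothesis cpos : forall x y, e x y -> 0 < c x y.

Lemma w_ge0 x y : 0 <= w x y.
Proof. by rewrite /w; case exy: (e x y) => //; apply: ltW; apply: cpos. Qed.

Lemma dcut_pos (X : {set V}) x y : x \in X -> y \notin X -> e x y -> 0 < dcut e c X.
Proof.
move=> xX yX exy; rewrite dcut_half (bigD1 x) //= (bigD1 y) //= xX yX /=.
rewrite -addrA ltr_wpDr //.
  apply: addr_ge0; first by apply: sumr_ge0 => *; apply: mulrn_wge0; apply: w_ge0.
  by apply: sumr_ge0 => *; apply: sumr_ge0 => *; apply: mulrn_wge0; apply: w_ge0.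
by rewrite /w exy cpos.
Qed.

Lemma cross_edge (X : {set V}) (p : seq V) x :
  path e x p -> x \in X -> last x p \notin X ->
  exists x', exists y', [/\ x' \in X, y' \notin X & e x' y'].
Proof.
elim: p x => [|z p IH] x /=; first by move=> _ ->.
case/andP => exz pz xX lz.
case zX: (z \in X); first exact: IH pz zX lz.
by exists x, z; rewrite zX.
Qed.
End G.

Lemma dcutC (R : realFieldType) (V : finType) (e : rel V) (c : V -> V -> R) (X : {set V}) :
  symmetric e -> (forall x y, c x y = c y x) -> dcut e c (~: X) = dcut e c X.
Proof.
move=> es cs.
have h : dcut e c (~: X) *+ 2 = dcut e c X *+ 2.
  rewrite !dcut_pairs //; apply: eq_bigr => x _; apply: eq_bigr => y _.
  by rewrite !inE; case: (x \in X); case: (y \in X).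
move: h; rewrite !mulr2n => h; lra.
Qed.

Lemma final_alg (R : realFieldType) (k : nat) (alpha dU A B C : R) :
  (2 <= k)%N -> 0 < dU -> 1 <= alpha -> A *+ 2 + B *+ 2 <= C *+ 2 ->
  C <= dU *+ k -> dU *+ (k - 2) <= B -> dU *+ k <= alpha * A -> k%:R <= 2 * alpha.
Proof.
move=> k2 dUpos ha1 key sQ sX sY.
rewrite -[dU *+ k]mulr_natl in sQ sY; rewrite -[dU *+ (k - 2)]mulr_natl (natrB _ k2) in sX.
have hA : A <= 2 * dU.
  move: key; rewrite !mulr2n => key'; move: sX; rewrite mulrBl => sX'; lra.
have h2 : k%:R * dU <= (2 * alpha) * dU.
  apply: (le_trans sY); rewrite [2 * alpha]mulrC -mulrA; apply: ler_wpM2l => //; lra.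
by rewrite ler_pM2r in h2.
Qed.

Unset Implicit Arguments.

Theorem lemma2p3 (R : archiRealFieldType) (V : finType) (e : rel V) (c : V -> V -> R)
    (alpha : R) (U S : {set V}) :
  weighted_graph e c ->
  connected_graph e ->
  1 <= alpha ->
  approx_min_cut e c alpha U ->
  (exists Q : {set V}, inC e c U Q) ->
  minset (fun S' : {set V} => (S' \subset U) && hitsC e c U S') S ->
  (#|S|%:Z <= Num.floor (2 * alpha) + 1)%R.
Proof.
move=> [esy eirr csym cpos] conn ha1 [/andP [Un0 UnT] amc] [Q0 hQ0] /minsetP [/andP [SU hS] minS].
have hfl : (2 <= Num.floor (2 * alpha))%R.
  by rewrite floor_ge_int; lra.
case: (leqP #|S| 1) => hk.
  have : (#|S|%:Z <= 1)%R by rewrite lez_nat.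
  lia.
suff hk2 : (#|S|%:R <= 2 * alpha :> R).
  have : (#|S|%:Z <= Num.floor (2 * alpha))%R by rewrite floor_ge_int.
  lia.
have hSn0 : forall s, s \in S -> ~~ hitsC e c U (S :\ s).
  move=> s sS; apply/negP => hit.
  have := minS (S :\ s); rewrite hit (subset_trans (subsetDl S [set s]) SU) => /(_ isT (subsetDl _ _)).
  by move/setP/(_ s); rewrite !inE eqxx sS.
pose Qf s := odflt set0 [pick Q | inC e c U Q && ((S :\ s) :&: Q == set0)].
have hQf : forall s, s \in S -> inC e c U (Qf s) /\ (S :\ s) :&: Qf s = set0.
  move=> s sS; rewrite /Qf; case: pickP => [Q /andP [h1 /eqP h2] //|h0].
  have := hSn0 s sS; case/forallPn => Q; rewrite negb_imply negbK => /andP [h1 h2].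
  by have := h0 Q; rewrite h1 h2.
have hQin : forall s, s \in S -> inC e c U (Qf s) by move=> s /hQf [].
have htQ : forall s t, s \in S -> t \in S -> t != s -> t \notin Qf s.
  move=> s t sS tS ts; apply/negP => tQ.
  have [_ /setP /(_ t)] := hQf s sS.
  by rewrite !inE ts tS tQ.
have hsQ : forall s, s \in S -> s \in Qf s.
  move=> s sS; have := hS; move/forallP/(_ (Qf s)); rewrite hQin //= => /set0Pn [x].
  rewrite inE => /andP [xS xQ]; case: (eqVneq x s) => [exs|xs]; first by move: xQ; rewrite exs.
  by have := htQ s x sS xS xs; rewrite xQ.
have hUQ : forall s v, s \in S -> v \notin U -> v \in Qf s.
  move=> s v sS vU; have := hQin s sS; case/and3P => _ /properP [sub _] _.
  by apply: (subsetP sub); rewrite inE.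
have hdQ : forall s, s \in S -> dcut e c (Qf s) <= dcut e c U.
  by move=> s sS; case/and3P: (hQin s sS).
pose T u := [set t in S | u \notin Qf t].
have TS : forall u, T u \subset S by move=> u; apply/subsetP => t; rewrite inE => /andP [].
have Ts : forall s, s \in S -> T s = S :\ s.
  move=> s sS; apply/setP => t; rewrite !inE.
  case: (eqVneq t s) => [->|ts] /=; first by rewrite hsQ // andbF.
  case tS: (t \in S) => //=; by rewrite (htQ t s tS sS) // eq_sym.
have TU : forall v, v \notin U -> T v = set0.
  move=> v vU; apply/setP => t; rewrite !inE.
  case tS: (t \in S) => //=; by rewrite hUQ.
set k := #|S|.
pose Y s := [set u | T u == S :\ s].
pose X (i : 'I_(k - 2)) := [set u | (#|T u| <= i)%N].
pose dU := dcut e c U.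
have key : \sum_(s in S) dcut e c (Y s) *+ 2 + \sum_(i < k - 2) dcut e c (X i) *+ 2
        <= \sum_(s in S) dcut e c (Qf s) *+ 2.
  rewrite !(dcut_family esy csym) -big_split /=; apply: ler_sum => x _.
  rewrite -big_split /=; apply: ler_sum => y _.
  rewrite -mulrnDr; apply: ler_wpMn2l; first exact: w_ge0.
  have E1 : \sum_(s in S) ((x \in Y s) != (y \in Y s) : nat) =
            \sum_(s in S) (((T x == S :\ s) != (T y == S :\ s)) : nat).
    by apply: eq_bigr => s _; rewrite !inE.
  have E2 : \sum_(i < k - 2) ((x \in X i) != (y \in X i) : nat) =
            \sum_(i < k - 2) ((((i < #|T x|)%N) != ((i < #|T y|)%N)) : nat).
    by apply: eq_bigr => i _; rewrite !inE (leqNgt #|T x|) (leqNgt #|T y|); case: (i < #|T x|)%N; case: (i < #|T y|)%N.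
  have E3 : \sum_(s in S) ((x \in Qf s) != (y \in Qf s) : nat) =
            \sum_(s in S) (((s \in T x) != (s \in T y)) : nat).
    apply: eq_bigr => s sS; rewrite !inE sS /=.
    by case: (x \in Qf s); case: (y \in Qf s).
  by rewrite E1 E2 E3; apply: comb.
have hSs : forall s, s \in S -> S :\ s != set0.
  move=> s sS; rewrite -card_gt0; have := cardsD1 s S; rewrite sS /= => h; move: hk; rewrite h; clear; lia.
have hTs : forall s, s \in S -> #|T s| = (k - 1)%N.
  move=> s sS; rewrite Ts //; have := cardsD1 s S; rewrite sS /= => h; rewrite /k h; clear; lia.
have [v0 v0U] : exists v, v \notin U.
  by move: UnT; rewrite -subTset => /subsetPn [v _ vU]; exists v.
have [u0 u0U] : exists u, u \in U by move/set0Pn: Un0.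
have [s0 s0S] : exists s, s \in S.
  by apply/set0Pn; rewrite -card_gt0; move: hk; clear; lia.
have dUpos : 0 < dU.
  have := conn u0 v0; case/connectP => p pth lst.
  have lv : last u0 p \notin U by rewrite -lst.
  have [x' [y' [h1 h2 h3]]] := cross_edge pth u0U lv.
  exact: (dcut_pos cpos h1 h2 h3).
have hY : forall s, s \in S -> dU <= alpha * dcut e c (Y s).
  move=> s sS; apply: amc; apply/andP; split.
    by apply/set0Pn; exists s; rewrite inE Ts.
  apply/eqP => /setP /(_ v0); rewrite !inE TU // eq_sym => h.
  by have := hSs s sS; rewrite h.
have hX : forall i : 'I_(k - 2), dU <= dcut e c (X i).
  move=> i.
  have nS : forall s, s \in S -> s \notin X i.
    move=> s sS; rewrite inE hTs //; have := ltn_ord i; move: (val i) => j; clear; lia.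
  have sub : ~: U \subset X i by apply/subsetP => v; rewrite !inE => vU; rewrite TU // cards0.
  case: (eqVneq (~: U) (X i)) => [<-|neq]; first by rewrite /dU (dcutC _ esy csym).
  rewrite leNgt; apply/negP => hlt.
  have hin : inC e c U (X i).
    apply/and3P; split.
    - rewrite properT; apply/eqP => /setP /(_ s0); rewrite (negbTE (nS s0 s0S)).
      by rewrite inE.
    - by rewrite properEneq neq sub.
    - exact: ltW.
  have := hS; move/forallP/(_ (X i)); rewrite hin /= => /set0Pn [x].
  by rewrite inE => /andP [xS xX]; move: (nS x xS); rewrite xX.
have cst : forall n (x : R), \sum_(i < n) x = x *+ n.
  move=> n x; rewrite big_const_ord; elim: n => // n IH; by rewrite iterS IH mulrS.
have sQ : \sum_(s in S) dcut e c (Qf s) <= dU *+ k.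
  by rewrite -sumr_const; apply: ler_sum => s sS; exact: hdQ.
have sX : dU *+ (k - 2) <= \sum_(i < k - 2) dcut e c (X i).
  by rewrite -cst; apply: ler_sum => i _; exact: hX.
have sY : dU *+ k <= alpha * \sum_(s in S) dcut e c (Y s).
  by rewrite mulr_sumr -sumr_const; apply: ler_sum => s sS; exact: hY.
rewrite !sumrMnl in key.
have k2 : (2 <= k)%N by exact: hk.
exact: (final_alg k2 dUpos ha1 key sQ sX sY).
Qed.
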